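(* Let $\mathsf{CS}$ be a constant specification for $\mathsf{LPC}^+$ and let $\mathcal M=(W,W_N,R_{Fm},R_{Tm},V)$ be the canonical relational model for $\mathsf{LPC}^+_{\mathsf{CS}}$. Then for every formula $\phi$ and every $\Gamma\in W$: $\mathcal M,\Gamma\models\phi$ iff $\phi\in\Gamma$.
   Context: Language: countable sets $\mathsf{Const}$, $\mathsf{Var}$, $\mathsf{Prop}$; terms $t ::= c \mid x \mid t\cdot t \mid t+t \mid\ !t$; formulas $\phi ::= p \mid \neg\phi \mid \phi\wedge\phi \mid \phi\supset\phi \mid \phi>\phi \mid t{:}\phi$; $\mathsf{Tm},\mathsf{Fm}$ the sets of terms and formulas; $\bot:=\chi\wedge\neg\chi$ for a fixed $\chi$. Axiom schemes of $\mathsf{LPC}^+$: (A1) all instances of classical tautologies; (A2) $(\phi>(\psi\supset\chi))\supset((\phi>\psi)\supset(\phi>\chi))$; (A3) $\phi>\phi$; (A4) $(\phi>\psi)\supset(\phi\supset\psi)$; (A5) $(s{:}(\phi>\psi)\wedge t{:}\phi) > (s\cdot t){:}\psi$; (A6) $s{:}\phi > (s+t){:}\phi$; (A7) $t{:}\phi>(s+t){:}\phi$; (A8) $t{:}\phi>\phi$; (A9) $t{:}\phi > (!t){:}t{:}\phi$. A constant specification $\mathsf{CS}$ is a set of $c{:}\phi$ with $c\in\mathsf{Const}$, $\phi$ an instance of (A1)–(A9). $\mathsf{LPC}^+_{\mathsf{CS}}$: axioms (A1)–(A9) and $\mathsf{CS}$; rules (MP) and (RCN): from $\psi$ infer $\phi>\psi$.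 $T\vdash\phi$ iff $\vdash(\psi_1\wedge\cdots\wedge\psi_n)\supset\phi$ for some $\psi_i\in T$; $T$ consistent iff $T\nvdash\bot$; maximal consistent sets as usual. Relational models $(W,W_N,R_{Fm},R_{Tm},V)$: $W_N\subseteq W$ nonempty; $R_\phi\subseteq W_N\times W_N$ for each formula; $R_t\subseteq W\times W$ for each term; $V(w)\subseteq\mathsf{Prop}$ for $w\in W_N$, $V(w)\subseteq\mathsf{Fm}$ for $w\in W\setminus W_N$. Truth: at non-normal $w$, $w\models\phi$ iff $\phi\in V(w)$; at normal $w$: $p$ iff $p\in V(w)$, $\neg,\wedge,\supset$ classical, $\phi>\psi$ iff $R_\phi(w)\subseteq[\psi]$, $t{:}\phi$ iff $R_t(w)\subseteq[\phi]$, with $[\phi]=\{w\in W: w\models\phi\}$. The canonical relational model for $\mathsf{LPC}^+_{\mathsf{CS}}$: $W$ is the set of all subsets of $\mathsf{Fm}$; $W_N$ is the set of maximal $\mathsf{LPC}^+_{\mathsf{CS}}$-consistent sets; for $\Gamma,\Delta\in W_N$, $\Gamma R_\phi\Delta$ iff $\Gamma/\phi\subseteq\Delta$ where $\Gamma/\phi=\{\psi:\phi>\psi\in\Gamma\}$; for $\Gamma,\Delta\in W$, $\Gamma R_t\Delta$ iff $\Gamma/t\subseteq\Delta$ where $\Gamma/t=\{\psi: t{:}\psi\in\Gamma\}$; $V(\Gamma)=\Gamma$ for $\Gamma\in W\setminus W_N$ and $V(\Gamma)=\mathsf{Prop}\cap\Gamma$ for $\Gamma\in W_N$. *)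

(* Defs.v *)
From Stdlib Require Import List.
Import ListNotations.

(* Const, Var, Prop are countable: represented by nat. *)
Inductive Tm : Type :=
| TConst : nat -> Tm
| TVar : nat -> Tm
| TApp : Tm -> Tm -> Tm
| TSum : Tm -> Tm -> Tm
| TBang : Tm -> Tm.

Inductive Fm : Type :=
| Atom : nat -> Fm
| Neg : Fm -> Fm
| And : Fm -> Fm -> Fm
| Imp : Fm -> Fm -> Fm
| Cond : Fm -> Fm -> Fm
| Just : Tm -> Fm -> Fm.

(* bot := chi /\ ~chi for a fixed chi; we fix chi := Atom 0. *)
Definition chi0 : Fm := Atom 0.
Definition Bot : Fm := And chi0 (Neg chi0).

(* Classical tautology instances: formulas true under every boolean valuation
   of their maximal non-Boolean subformulas (atoms, phi > psi, t:phi). *)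
Fixpoint beval (v : Fm -> bool) (f : Fm) : bool :=
  match f with
  | Neg a => negb (beval v a)
  | And a b => andb (beval v a) (beval v b)
  | Imp a b => orb (negb (beval v a)) (beval v b)
  | _ => v f
  end.

Definition Tautology (f : Fm) : Prop := forall v, beval v f = true.

Inductive AxiomInst : Fm -> Prop :=
| A1 : forall f, Tautology f -> AxiomInst f
| A2 : forall p q r,
    AxiomInst (Imp (Cond p (Imp q r)) (Imp (Cond p q) (Cond p r)))
| A3 : forall p, AxiomInst (Cond p p)
| A4 : forall p q, AxiomInst (Imp (Cond p q) (Imp p q))
| A5 : forall s t p q,
    AxiomInst (Cond (And (Just s (Cond p q)) (Just t p)) (Just (TApp s t) q))
| A6 : forall s t p, AxiomInst (Cond (Just s p) (Just (TSum s t) p))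
| A7 : forall s t p, AxiomInst (Cond (Just t p) (Just (TSum s t) p))
| A8 : forall t p, AxiomInst (Cond (Just t p) p)
| A9 : forall t p, AxiomInst (Cond (Just t p) (Just (TBang t) (Just t p))).

Definition is_CS (CS : Fm -> Prop) : Prop :=
  forall f, CS f -> exists c p, f = Just (TConst c) p /\ AxiomInst p.

Inductive Prov (CS : Fm -> Prop) : Fm -> Prop :=
| P_ax : forall f, AxiomInst f -> Prov CS f
| P_cs : forall f, CS f -> Prov CS f
| P_mp : forall p q, Prov CS (Imp p q) -> Prov CS p -> Prov CS q
| P_rcn : forall p q, Prov CS q -> Prov CS (Cond p q).

Definition conjl (f : Fm) (rest : list Fm) : Fm := fold_left And rest f.

Definition Derives (CS : Fm -> Prop) (T : Fm -> Prop) (f : Fm) : Prop :=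
  Prov CS f \/
  exists g rest, T g /\ Forall T rest /\ Prov CS (Imp (conjl g rest) f).

Definition Consistent (CS : Fm -> Prop) (T : Fm -> Prop) : Prop :=
  ~ Derives CS T Bot.

Definition MaxConsistent (CS : Fm -> Prop) (T : Fm -> Prop) : Prop :=
  Consistent CS T /\
  forall T' : Fm -> Prop, (forall f, T f -> T' f) -> Consistent CS T' ->
    forall f, T' f -> T f.

(* Relational models (W, W_N, R_Fm, R_Tm, V). V w is a set of formulas;
   at normal worlds only its atoms matter. *)
Record RelModel : Type := {
  world : Type;
  normal : world -> Prop;
  RF : Fm -> world -> world -> Prop;
  RT : Tm -> world -> world -> Prop;
  Val : world -> Fm -> Prop
}.

Fixpoint sat (M : RelModel) (w : world M) (f : Fm) : Prop :=
  match f with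
  | Atom p => Val M w (Atom p)
  | Neg a => (normal M w /\ ~ sat M w a) \/ (~ normal M w /\ Val M w f)
  | And a b => (normal M w /\ sat M w a /\ sat M w b) \/ (~ normal M w /\ Val M w f)
  | Imp a b => (normal M w /\ (sat M w a -> sat M w b)) \/ (~ normal M w /\ Val M w f)
  | Cond a b => (normal M w /\ forall u, RF M a w u -> sat M u b)
                \/ (~ normal M w /\ Val M w f)
  | Just t a => (normal M w /\ forall u, RT M t w u -> sat M u a)
                \/ (~ normal M w /\ Val M w f)
  end.

Definition canonical_model (CS : Fm -> Prop) : RelModel := {|
  world := Fm -> Prop;
  normal := MaxConsistent CS;
  RF := fun p G D => MaxConsistent CS G /\ MaxConsistent CS D /\
                     (forall q, G (Cond p q) -> D q);
  RT := fun t G D => forall q, G (Just t q) -> D q;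
  Val := fun G f => (MaxConsistent CS G /\ (exists p, f = Atom p) /\ G f)
                    \/ (~ MaxConsistent CS G /\ G f)
|}.

(* Main.v *)
Require Import Defs.
From Stdlib Require Import List Classical Arith Lia Cantor Bool.
Import ListNotations.

Definition Top : Fm := Imp Bot Bot.

Fixpoint bigconj (l : list Fm) : Fm :=
  match l with [] => Top | x :: l => And x (bigconj l) end.

Lemma beval_Top v : beval v Top = true.
Proof. unfold Top, Bot, chi0; simpl. destruct (v (Atom 0)); reflexivity. Qed.

Lemma beval_Bot v : beval v Bot = false.
Proof. unfold Bot, chi0; simpl. destruct (v (Atom 0)); reflexivity. Qed.

Lemma beval_bigconj v l : beval v (bigconj l) = forallb (beval v) l.
Proof. induction l; simpl. apply beval_Top. rewrite IHl; reflexivity. Qed.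

Lemma beval_conjl v g rest : beval v (conjl g rest) = beval v g && forallb (beval v) rest.
Proof.
  unfold conjl; revert g; induction rest; intros; simpl.
  - rewrite andb_true_r; reflexivity.
  - rewrite IHrest. simpl. rewrite andb_assoc. reflexivity.
Qed.

Ltac btac :=
  intros;
  repeat match goal with H : context [beval _ _] |- _ => revert H end;
  cbn [beval bigconj];
  rewrite ?beval_bigconj, ?beval_conjl, ?beval_Top, ?beval_Bot, ?forallb_app;
  repeat match goal with
         | |- context [beval ?v ?x] => destruct (beval v x)
         | |- context [forallb ?f ?l] => destruct (forallb f l)
         end; simpl; auto; try discriminate.

Lemma prov_sem1 CS A B : Prov CS A -> (forall v, beval v A = true -> beval v B = true) -> Prov CS B.
Proof.
  intros HA H. apply (P_mp _ A B); auto. apply P_ax, A1. intro v. simpl.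
  destruct (beval v A) eqn:E; simpl; auto.
Qed.

Lemma prov_sem2 CS A B C : Prov CS A -> Prov CS B ->
  (forall v, beval v A = true -> beval v B = true -> beval v C = true) -> Prov CS C.
Proof.
  intros HA HB H. apply P_mp with B; [|auto]. apply P_mp with A; [|auto].
  apply P_ax, A1; intro v; simpl.
  destruct (beval v A) eqn:EA, (beval v B) eqn:EB; simpl; auto.
Qed.

Definition Der CS (T : Fm -> Prop) f := exists l, Forall T l /\ Prov CS (Imp (bigconj l) f).

Lemma Derives_Der CS T f : Derives CS T f <-> Der CS T f.
Proof.
  split.
  - intros [Hp | [g [rest [Hg [Hr Hp]]]]].
    + exists []; split; auto. apply prov_sem1 with f; auto. btac.
    + exists (g :: rest); split; [constructor; auto|].
      apply prov_sem1 with (Imp (conjl g rest) f); auto. btac.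
  - intros [[|g rest] [Hl Hp]].
    + left. apply prov_sem2 with (Imp (bigconj []) f) Top; auto.
      * apply P_ax, A1. intro v. apply beval_Top.
      * btac.
    + inversion Hl; subst. right. exists g, rest. repeat split; auto.
      apply prov_sem1 with (Imp (bigconj (g :: rest)) f); auto. btac.
Qed.

Lemma Der_mono CS (T T' : Fm -> Prop) f : (forall x, T x -> T' x) -> Der CS T f -> Der CS T' f.
Proof. intros H [l [Hl Hp]]. exists l; split; auto. eapply Forall_impl; eauto. Qed.

Lemma Der_prov CS T f : Prov CS f -> Der CS T f.
Proof. intros H. exists []; split; auto. apply prov_sem1 with f; auto. btac. Qed.

Lemma Der_mem CS (T : Fm -> Prop) f : T f -> Der CS T f.
Proof. intros H. exists [f]; split; auto. apply P_ax, A1. intro v. btac. Qed.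

Lemma Der_mp CS T a b : Der CS T (Imp a b) -> Der CS T a -> Der CS T b.
Proof.
  intros [l1 [H1 P1]] [l2 [H2 P2]]. exists (l1 ++ l2); split.
  - apply Forall_app; auto.
  - eapply prov_sem2; [exact P1 | exact P2 |]. btac.
Qed.

Lemma Der_sem1 CS T a b : Der CS T a -> (forall v, beval v a = true -> beval v b = true) -> Der CS T b.
Proof.
  intros Ha H. apply Der_mp with a; auto. apply Der_prov. apply P_ax, A1. intro v. simpl.
  destruct (beval v a) eqn:E; simpl; auto.
Qed.

Lemma Der_sem2 CS T a b c : Der CS T a -> Der CS T b ->
  (forall v, beval v a = true -> beval v b = true -> beval v c = true) -> Der CS T c.
Proof.
  intros Ha Hb H. apply Der_mp with b; auto. apply Der_mp with a; auto.
  apply Der_prov. apply P_ax, A1. intro v. simpl.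
  destruct (beval v a) eqn:E, (beval v b) eqn:E'; simpl; auto.
Qed.

Lemma Der_ded CS (T : Fm -> Prop) a b : Der CS (fun x => T x \/ x = a) b -> Der CS T (Imp a b).
Proof.
  intros [l [Hl Hp]].
  assert (exists l', Forall T l' /\ forall v, beval v (bigconj l') = true ->
            beval v a = true -> beval v (bigconj l) = true) as [l' [Hl' Hv]].
  { clear Hp. induction l as [|x l IH].
    - exists []; split; [constructor | intros; apply beval_Top].
    - inversion Hl as [|? ? Hx Hl0]; subst. destruct (IH Hl0) as [l' [H1 H2]].
      destruct Hx as [Hx|Hx].
      + exists (x :: l'); split; auto. intros v. specialize (H2 v). revert H2. btac.
      + subst. exists l'; split; auto. intros v. specialize (H2 v). revert H2. btac. }
  exists l'; split; auto. apply prov_sem1 with (Imp (bigconj l) b); auto.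
  intros v. specialize (Hv v). revert Hv. btac.
Qed.

Lemma Cons_Der CS T : Consistent CS T <-> ~ Der CS T Bot.
Proof. unfold Consistent. rewrite Derives_Der. tauto. Qed.

Lemma Cons_sub CS (T T' : Fm -> Prop) : (forall x, T x -> T' x) -> Consistent CS T' -> Consistent CS T.
Proof. rewrite !Cons_Der. intros H H' HD. apply H'. eapply Der_mono; eauto. Qed.

Section MC.
Variable CS : Fm -> Prop.
Variable G : Fm -> Prop.
Hypothesis HG : MaxConsistent CS G.

Lemma mc_closed f : Der CS G f -> G f.
Proof.
  intros Hf. destruct HG as [Hc Hmax].
  apply (Hmax (fun x => G x \/ x = f)); auto.
  rewrite Cons_Der. intro HD. apply Der_ded in HD.
  rewrite Cons_Der in Hc. apply Hc. exact (Der_mp _ _ _ _ HD Hf).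
Qed.

Lemma mc_cons : ~ Der CS G Bot.
Proof. destruct HG as [Hc _]. rewrite Cons_Der in Hc. exact Hc. Qed.

Lemma mc_neg a : G (Neg a) <-> ~ G a.
Proof.
  split.
  - intros Hn Ha. apply mc_cons. apply Der_sem2 with (Neg a) a; try (apply Der_mem; auto).
    btac.
  - intros Hna. apply mc_closed.
    destruct (classic (Der CS (fun x => G x \/ x = a) Bot)) as [HD|HD].
    + apply Der_ded in HD. eapply Der_sem1; [exact HD|]. btac.
    + exfalso. apply Hna. destruct HG as [_ Hmax].
      apply (Hmax (fun x => G x \/ x = a)); auto. rewrite Cons_Der; auto.
Qed.

Lemma mc_and a b : G (And a b) <-> G a /\ G b.
Proof.
  split.
  - intros H; split; apply mc_closed; apply Der_sem1 with (And a b); try (apply Der_mem; exact H); btac.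
  - intros [Ha Hb]; apply mc_closed; apply Der_sem2 with a b; try (apply Der_mem; assumption); btac.
Qed.

Lemma mc_imp a b : G (Imp a b) <-> (G a -> G b).
Proof.
  split.
  - intros H Ha. apply mc_closed. apply Der_mp with a; apply Der_mem; auto.
  - intros H. destruct (classic (G a)) as [Ha|Ha].
    + apply mc_closed. eapply Der_sem1; [apply Der_mem; apply H; exact Ha|]. btac.
    + apply mc_neg in Ha. apply mc_closed. eapply Der_sem1; [apply Der_mem; exact Ha|]. btac.
Qed.

Lemma mc_cond_conj a l : Forall (fun x => G (Cond a x)) l -> G (Cond a (bigconj l)).
Proof.
  induction l as [|x l IH]; intros Hl.
  - apply mc_closed, Der_prov, P_rcn, P_ax, A1. intro v. apply beval_Top.
  - inversion Hl; subst. specialize (IH H2). simpl.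
    apply mc_closed.
    assert (Hr : Prov CS (Cond a (Imp x (Imp (bigconj l) (And x (bigconj l)))))).
    { apply P_rcn, P_ax, A1. intro v. btac. }
    apply Der_mp with (Cond a (bigconj l)); [|apply Der_mem; auto].
    apply Der_mp with (Cond a (Imp (bigconj l) (And x (bigconj l)))); [apply Der_prov, P_ax, A2|].
    apply Der_mp with (Cond a x); [|apply Der_mem; auto].
    apply Der_mp with (Cond a (Imp x (Imp (bigconj l) (And x (bigconj l))))).
    + apply Der_prov, P_ax, A2.
    + apply Der_prov; auto.
Qed.

End MC.

Fixpoint decT (k n : nat) : Tm :=
  match k with
  | 0 => TConst 0
  | S k => match of_nat n with
           | (0, m) => TConst m
           | (1, m) => TVar m
           | (2, m) => let (x, y) := of_nat m in TApp (decT k x) (decT k y)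
           | (3, m) => let (x, y) := of_nat m in TSum (decT k x) (decT k y)
           | (_, m) => TBang (decT k m)
           end
  end.

Fixpoint decF (k n : nat) : Fm :=
  match k with
  | 0 => Atom 0
  | S k => match of_nat n with
           | (0, m) => Atom m
           | (1, m) => Neg (decF k m)
           | (2, m) => let (x, y) := of_nat m in And (decF k x) (decF k y)
           | (3, m) => let (x, y) := of_nat m in Imp (decF k x) (decF k y)
           | (4, m) => let (x, y) := of_nat m in Cond (decF k x) (decF k y)
           | (_, m) => let (x, y) := of_nat m in Just (decT k x) (decF k y)
           end
  end.

Lemma decT_surj t : exists n k, forall fuel, k <= fuel -> decT fuel n = t.
Proof.
  induction t.
  - exists (to_nat (0, n)), 1. intros [|fuel] H; [lia|]. cbn [decT]. rewrite cancel_of_to. reflexivity.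
  - exists (to_nat (1, n)), 1. intros [|fuel] H; [lia|]. cbn [decT]. rewrite cancel_of_to. reflexivity.
  - destruct IHt1 as [n1 [k1 H1]], IHt2 as [n2 [k2 H2]].
    exists (to_nat (2, to_nat (n1, n2))), (S (max k1 k2)). intros [|fuel] H; [lia|].
    cbn [decT]. rewrite !cancel_of_to. rewrite H1, H2 by lia. reflexivity.
  - destruct IHt1 as [n1 [k1 H1]], IHt2 as [n2 [k2 H2]].
    exists (to_nat (3, to_nat (n1, n2))), (S (max k1 k2)). intros [|fuel] H; [lia|].
    cbn [decT]. rewrite !cancel_of_to. rewrite H1, H2 by lia. reflexivity.
  - destruct IHt as [n1 [k1 H1]].
    exists (to_nat (4, n1)), (S k1). intros [|fuel] H; [lia|].
    cbn [decT]. rewrite !cancel_of_to. rewrite H1 by lia. reflexivity.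
Qed.

Lemma decF_surj f : exists n k, forall fuel, k <= fuel -> decF fuel n = f.
Proof.
  induction f.
  - exists (to_nat (0, n)), 1. intros [|fuel] H; [lia|]. cbn [decF]. rewrite cancel_of_to. reflexivity.
  - destruct IHf as [n1 [k1 H1]].
    exists (to_nat (1, n1)), (S k1). intros [|fuel] H; [lia|].
    cbn [decF]. rewrite !cancel_of_to. rewrite H1 by lia. reflexivity.
  - destruct IHf1 as [n1 [k1 H1]], IHf2 as [n2 [k2 H2]].
    exists (to_nat (2, to_nat (n1, n2))), (S (max k1 k2)). intros [|fuel] H; [lia|].
    cbn [decF]. rewrite !cancel_of_to. rewrite H1, H2 by lia. reflexivity.
  - destruct IHf1 as [n1 [k1 H1]], IHf2 as [n2 [k2 H2]].
    exists (to_nat (3, to_nat (n1, n2))), (S (max k1 k2)). intros [|fuel] H; [lia|].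
    cbn [decF]. rewrite !cancel_of_to. rewrite H1, H2 by lia. reflexivity.
  - destruct IHf1 as [n1 [k1 H1]], IHf2 as [n2 [k2 H2]].
    exists (to_nat (4, to_nat (n1, n2))), (S (max k1 k2)). intros [|fuel] H; [lia|].
    cbn [decF]. rewrite !cancel_of_to. rewrite H1, H2 by lia. reflexivity.
  - destruct (decT_surj t) as [n1 [k1 H1]], IHf as [n2 [k2 H2]].
    exists (to_nat (5, to_nat (n1, n2))), (S (max k1 k2)). intros [|fuel] H; [lia|].
    cbn [decF]. rewrite !cancel_of_to. rewrite H1, H2 by lia. reflexivity.
Qed.

Definition enum (n : nat) : Fm := let (a, b) := of_nat n in decF a b.

Lemma enum_surj f : exists n, enum n = f.
Proof.
  destruct (decF_surj f) as [c [k Hk]]. exists (to_nat (k, c)).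
  unfold enum. rewrite cancel_of_to. apply Hk. lia.
Qed.

Fixpoint chain CS (S0 : Fm -> Prop) (n : nat) : Fm -> Prop :=
  match n with
  | 0 => S0
  | S n => fun f => chain CS S0 n f \/
            (f = enum n /\ Consistent CS (fun g => chain CS S0 n g \/ g = enum n))
  end.

Lemma chain_mono CS S0 m n f : m <= n -> chain CS S0 m f -> chain CS S0 n f.
Proof. induction 1 as [|n Hle IH]; intros Hc; auto. simpl. left; auto. Qed.

Lemma chain_cons CS S0 n : Consistent CS S0 -> Consistent CS (chain CS S0 n).
Proof.
  intros H0. induction n; simpl; auto.
  destruct (classic (Consistent CS (fun g => chain CS S0 n g \/ g = enum n))) as [Hc|Hc].
  - eapply Cons_sub; [|exact Hc]. intros x [Hx|[Hx _]]; auto.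
  - eapply Cons_sub; [|exact IHn]. intros x [Hx|[_ Hx]]; auto. contradiction.
Qed.

Lemma lindenbaum CS (S0 : Fm -> Prop) : Consistent CS S0 ->
  exists U, MaxConsistent CS U /\ forall f, S0 f -> U f.
Proof.
  intros H0. exists (fun f => exists n, chain CS S0 n f). split.
  - split.
    + rewrite Cons_Der. intros [l [Hl Hp]].
      assert (exists N, Forall (chain CS S0 N) l) as [N HN].
      { clear Hp. induction l as [|x l IH].
        - exists 0; auto.
        - inversion Hl as [|? ? [n Hx] Hl0]; subst. destruct (IH Hl0) as [N HN].
          exists (max n N). constructor.
          + eapply chain_mono; [|exact Hx]. lia.
          + eapply Forall_impl; [|exact HN]. intros a. apply chain_mono. lia. }
      pose proof (chain_cons CS S0 N H0) as HC. rewrite Cons_Der in HC.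
      apply HC. exists l; auto.
    + intros T' Hsub Hc f Hf. destruct (enum_surj f) as [n Hn]. exists (S n). simpl.
      right. split; [auto|].
      eapply Cons_sub; [|exact Hc]. intros x [Hx|Hx].
      * apply Hsub. exists n; auto.
      * subst. auto.
  - intros f Hf. exists 0. exact Hf.
Qed.

Lemma mc_cond CS G a b : MaxConsistent CS G ->
  (forall u : Fm -> Prop, MaxConsistent CS u -> (forall q, G (Cond a q) -> u q) -> u b) ->
  G (Cond a b).
Proof.
  intros HG H. apply NNPP. intro Hn.
  destruct (lindenbaum CS (fun x => G (Cond a x) \/ x = Neg b)) as [u [Hu Hsub]].
  - rewrite Cons_Der. intro HD. apply Der_ded in HD.
    apply Der_sem1 with (b := b) in HD; [|btac].
    destruct HD as [l [Hl Hp]]. apply Hn. apply (mc_closed _ _ HG).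
    apply Der_mp with (Cond a (bigconj l)).
    + apply Der_mp with (Cond a (Imp (bigconj l) b)).
      * apply Der_prov, P_ax, A2.
      * apply Der_prov, P_rcn, Hp.
    + apply Der_mem. apply (mc_cond_conj CS); auto.
  - assert (Hnb : u (Neg b)) by (apply Hsub; auto).
    apply (mc_neg _ _ Hu) in Hnb. apply Hnb. apply H; auto.
Qed.

Theorem mainTheorem8 (CS : Fm -> Prop) (HCS : is_CS CS) :
  forall (f : Fm) (G : world (canonical_model CS)),
    sat (canonical_model CS) G f <-> G f.
Proof.
  induction f; intros G; simpl; destruct (classic (MaxConsistent CS G)) as [HG|HG].
  - firstorder eauto.
  - tauto.
  - rewrite (mc_neg _ _ HG), IHf. tauto.
  - tauto.
  - rewrite (mc_and _ _ HG), IHf1, IHf2. tauto.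
  - tauto.
  - rewrite (mc_imp _ _ HG), IHf1, IHf2. tauto.
  - tauto.
  - split.
    + intros [[_ H]|[H _]]; [|contradiction].
      apply (mc_cond CS); auto. intros u Hu Hq. apply IHf2. apply H. auto.
    + intros Hc. left. split; auto. intros u [_ [Hu Hq]]. apply IHf2. apply Hq. exact Hc.
  - tauto.
  - split.
    + intros [[_ H]|[H _]]; [|contradiction].
      apply (IHf (fun q => G (Just t q))). apply H. auto.
    + intros Hc. left. split; auto. intros u Hq. apply IHf. apply Hq. exact Hc.
  - tauto.
Qed.
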